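(* $\mathsf{C}_2\times\mathsf{AUC}_{[0,1]}\not\le_W\mathsf{ConC}_{[0,1]}$.
   Context: A represented space is a pair $(X,\delta_X)$ with $\delta_X:\subseteq\mathbb{N}^\mathbb{N}\to X$ a partial surjection; $[0,1]$ carries its Cauchy representation. A realizer of $f:\subseteq X\rightrightarrows Y$ is a partial $F$ with $\delta_Y F(p)\in f(\delta_X(p))$ for all $p\in\mathrm{dom}(f\circ\delta_X)$. $f\le_W g$ if there are computable partial $H,K:\subseteq\mathbb{N}^\mathbb{N}\to\mathbb{N}^\mathbb{N}$ such that $p\mapsto H\langle p,GK(p)\rangle$ realizes $f$ for every realizer $G$ of $g$. $f\times g$ denotes $(x,z)\mapsto f(x)\times g(z)$. $\mathcal{A}_-(X)$ denotes closed subsets represented by negative information (for $\{0,1\}$: a name enumerates the complement; for $[0,1]$: a name enumerates rational open intervals whose union is the complement). Closed choice $\mathsf C_X:\subseteq\mathcal A_-(X)\rightrightarrows X$, $A\mapsto A$, is defined on nonempty $A$; $\mathsf C_2$ is closed choice on $\{0,1\}$. $\mathsf{AUC}_{[0,1]}$ is $\mathsf C_{[0,1]}$ restricted to the sets $[0,1]$ and $\{x\}$, $x\in[0,1]$. $\mathsf{ConC}_{[0,1]}$ is $\mathsf C_{[0,1]}$ restricted to intervals $[a,b]$, $0\le a\le b\le1$. *)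

(* Defs.v *)
From Stdlib Require Import Reals Arith List.
Open Scope R_scope.

Definition Baire := nat -> nat.

Definition cpair (a b : nat) : nat := ((a + b) * (a + b + 1) / 2 + b)%nat.

Fixpoint lcode (l : list nat) : nat :=
  match l with
  | nil => 0%nat
  | x :: l' => S (cpair x (lcode l'))
  end.

Definition prefix (p : Baire) (k : nat) : list nat := map p (seq 0 k).

Definition bpair (p q : Baire) : Baire :=
  fun n => if Nat.even n then p (Nat.div2 n) else q (Nat.div2 n).
Definition bfst (r : Baire) : Baire := fun n => r (2 * n)%nat.
Definition bsnd (r : Baire) : Baire := fun n => r (2 * n + 1)%nat.

Inductive prog : Type :=
| PZero : prog
| PSucc : prog
| PProj : nat -> prog
| PComp : prog -> list prog -> prog
| PPrec : prog -> prog -> prog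
| PMin  : prog -> prog.

Inductive ev : prog -> list nat -> nat -> Prop :=
| ev_zero : forall l, ev PZero l 0
| ev_succ : forall x l, ev PSucc (x :: l) (S x)
| ev_proj : forall i l, (i < length l)%nat -> ev (PProj i) l (nth i l 0%nat)
| ev_comp : forall f gs l ys y, evs gs l ys -> ev f ys y -> ev (PComp f gs) l y
| ev_prec0 : forall b s l y, ev b l y -> ev (PPrec b s) (0%nat :: l) y
| ev_precS : forall b s n l r y,
    ev (PPrec b s) (n :: l) r -> ev s (n :: r :: l) y -> ev (PPrec b s) (S n :: l) y
| ev_min : forall f l n,
    ev f (n :: l) 0 ->
    (forall m, (m < n)%nat -> exists k, ev f (m :: l) (S k)) ->
    ev (PMin f) l n
with evs : list prog -> list nat -> list nat -> Prop :=
| evs_nil : forall l, evs nil l nil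
| evs_cons : forall g gs l y ys, ev g l y -> evs gs l ys -> evs (g :: gs) l (y :: ys).

Definition computable_nat (alpha : nat -> nat) : Prop :=
  exists t : prog, forall n, ev t (n :: nil) (alpha n).

(** * Computable partial functions on Baire space via Kleene associates.
    [kapp alpha p q] : the partial function with associate alpha maps p to q. *)
Definition kapp (alpha : nat -> nat) (p q : Baire) : Prop :=
  forall n, exists k,
    alpha (lcode (n :: prefix p k)) = S (q n) /\
    forall j, (j < k)%nat -> alpha (lcode (n :: prefix p j)) = 0%nat.

(** A represented space: a carrier with a (partial, single-valued) representation
    given as a relation [rep p x] : "p is a name of x". *)
Record space := { pt : Type; rep : Baire -> pt -> Prop }.

(** A partial multi-valued function f :⊆ X ⇉ Y, with dom f = {x | f(x) nonempty}. *)
Record problem := { src : space; tgt : space; rel : pt src -> pt tgt -> Prop }.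

(** A partial function F :⊆ N^N -> N^N is given by its domain D and values F. *)
Definition realizes (f : problem) (D : Baire -> Prop) (F : Baire -> Baire) : Prop :=
  forall p x, rep (src f) p x -> (exists y, rel f x y) ->
    D p /\ exists y, rep (tgt f) (F p) y /\ rel f x y.

Definition Wred (f g : problem) : Prop :=
  exists aH aK : nat -> nat, computable_nat aH /\ computable_nat aK /\
    forall (GD : Baire -> Prop) (G : Baire -> Baire), realizes g GD G ->
      forall p x, rep (src f) p x -> (exists y, rel f x y) ->
        exists r, kapp aK p r /\ GD r /\
          exists s, kapp aH (bpair p (G r)) s /\
            exists y, rep (tgt f) s y /\ rel f x y.

Definition prod_space (X Y : space) : space :=
  {| pt := (pt X * pt Y)%type;
     rep := fun r xy => rep X (bfst r) (fst xy) /\ rep Y (bsnd r) (snd xy) |}.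

Definition prod_problem (f g : problem) : problem :=
  {| src := prod_space (src f) (src g);
     tgt := prod_space (tgt f) (tgt g);
     rel := fun xz yw => rel f (fst xz) (fst yw) /\ rel g (snd xz) (snd yw) |}.

Definition b2n (b : bool) : nat := if b then 1%nat else 0%nat.

Definition two_space : space := {| pt := bool; rep := fun p b => p 0%nat = b2n b |}.

(** A_-({0,1}): a name enumerates the complement (value S i means i is in the
    complement, value 0 means no information). *)
Definition A2_space : space :=
  {| pt := bool -> Prop;
     rep := fun p A => (forall k, (p k <= 2)%nat) /\
                       forall b, ~ A b <-> exists k, p k = S (b2n b) |}.

Definition qval (a b c : nat) : R := (INR a - INR b) / INR (S c).
Definition qcode (n : nat) (r : R) : Prop :=
  exists a b c, n = cpair a (cpair b c) /\ r = qval a b c.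

Definition unit_interval (x : R) : Prop := 0 <= x <= 1.

Definition I_space : space :=
  {| pt := R;
     rep := fun p x => unit_interval x /\
             forall n, exists q, qcode (p n) q /\ Rabs (q - x) <= / 2 ^ n |}.

(** A_-([0,1]): closed subsets of [0,1]; a name enumerates rational open intervals
    (value S (cpair i j) codes the interval (q_i, q_j); value 0 no information)
    whose union, intersected with [0,1], is the complement of A in [0,1]. *)
Definition AI_space : space :=
  {| pt := R -> Prop;
     rep := fun p A =>
       (forall x, A x -> unit_interval x) /\
       forall x, unit_interval x ->
         (~ A x <-> exists k i j qi qj,
                      p k = S (cpair i j) /\ qcode i qi /\ qcode j qj /\
                      qi < x < qj) |}.

Definition C2 : problem := {| src := A2_space; tgt := two_space; rel := fun A b => A b |}.

Definition AUC_I : problem :=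
  {| src := AI_space; tgt := I_space;
     rel := fun A x => A x /\
       ((forall y, A y <-> unit_interval y) \/
        (exists z, unit_interval z /\ forall y, A y <-> y = z)) |}.

Definition ConC_I : problem :=
  {| src := AI_space; tgt := I_space;
     rel := fun A x => A x /\
       exists a b, 0 <= a <= b /\ b <= 1 /\ forall y, A y <-> a <= y <= b |}.

(* Main.v *)
Require Import Defs.
From Stdlib Require Import Reals Arith List.
From Stdlib Require Import Lia Lra ZArith.
From Stdlib Require Import Classical ClassicalEpsilon FunctionalExtensionality.
Open Scope R_scope.


Definition Tri (s : nat) : nat := (s * (s + 1) / 2)%nat.

Lemma Tri_S s : Tri (S s) = (Tri s + S s)%nat.
Proof.
  unfold Tri.
  replace (S s * (S s + 1))%nat with (s * (s + 1) + (S s) * 2)%nat by lia.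
  rewrite Nat.div_add by lia. reflexivity.
Qed.

Lemma Tri_mono s s' : (s <= s')%nat -> (Tri s <= Tri s')%nat.
Proof. intros; unfold Tri; apply Nat.Div0.div_le_mono. apply Nat.mul_le_mono; lia. Qed.

Lemma cpair_Tri a b : cpair a b = (Tri (a + b) + b)%nat.
Proof. reflexivity. Qed.

Lemma cpair_inj a b a' b' : cpair a b = cpair a' b' -> a = a' /\ b = b'.
Proof.
  rewrite !cpair_Tri. intro H.
  assert (a + b = a' + b')%nat.
  { destruct (Nat.lt_trichotomy (a+b) (a'+b')) as [Hl|[He|Hl]]; auto.
    - pose proof (Tri_mono (S (a+b)) (a'+b') Hl). rewrite Tri_S in H0. lia.
    - pose proof (Tri_mono (S (a'+b')) (a+b) Hl). rewrite Tri_S in H0. lia. }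
  rewrite H0 in H. lia.
Qed.

Lemma qcode_fun n q q' : qcode n q -> qcode n q' -> q = q'.
Proof.
  intros [a [b [c [H1 H2]]]] [a' [b' [c' [H1' H2']]]].
  rewrite H1 in H1'. apply cpair_inj in H1' as [-> H1']. apply cpair_inj in H1' as [-> ->].
  subst; reflexivity.
Qed.

Lemma prefix_ext (x x' : Baire) k :
  (forall i, (i < k)%nat -> x' i = x i) -> prefix x' k = prefix x k.
Proof.
  intro H. unfold prefix. apply map_ext_in. intros i Hi. apply in_seq in Hi. apply H. lia.
Qed.

Definition Commit (al : nat -> nat) (x : Baire) (m v k : nat) : Prop :=
  al (lcode (m :: prefix x k)) = S v /\
  forall j, (j < k)%nat -> al (lcode (m :: prefix x j)) = 0%nat.

Lemma Commit_transfer al x x' m v k :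
  Commit al x m v k -> (forall i, (i < k)%nat -> x' i = x i) -> Commit al x' m v k.
Proof.
  intros [H1 H2] He. split.
  - rewrite (prefix_ext x x' k He). exact H1.
  - intros j Hj. rewrite (prefix_ext x x' j). apply H2; auto.
    intros i Hi; apply He; lia.
Qed.

Lemma Commit_unique al x m v v' k k' :
  Commit al x m v k -> Commit al x m v' k' -> v = v'.
Proof.
  intros [H1 H2] [H1' H2'].
  destruct (Nat.lt_trichotomy k k') as [Hl|[He|Hl]].
  - rewrite H2' in H1 by auto. discriminate.
  - subst. rewrite H1 in H1'. injection H1'; auto.
  - rewrite H2 in H1' by auto. discriminate.
Qed.

Lemma kapp_Commit al x s m : kapp al x s -> exists k, Commit al x m (s m) k.
Proof. intros H. destruct (H m) as [k Hk]. exists k. exact Hk. Qed.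

Lemma Commit_kapp al x s m v k : Commit al x m v k -> kapp al x s -> s m = v.
Proof.
  intros Hc Hk. destruct (kapp_Commit al x s m Hk) as [k' Hk'].
  symmetry. eapply Commit_unique; eauto.
Qed.

Lemma kapp_unique al x s s' : kapp al x s -> kapp al x s' -> s = s'.
Proof.
  intros H H'. apply functional_extensionality. intro m.
  destruct (kapp_Commit al x s' m H') as [k Hk].
  eapply Commit_kapp; eauto.
Qed.

Lemma kapp_cont al p r : kapp al p r -> forall L, exists M, forall p' r',
  (forall i, (i < M)%nat -> p' i = p i) -> kapp al p' r' -> forall i, (i < L)%nat -> r' i = r i.
Proof.
  intros Hk L. induction L as [|L IH].
  - exists 0%nat. intros; lia.
  - destruct IH as [M HM]. destruct (kapp_Commit al p r L Hk) as [k Hc].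
    exists (Nat.max M k). intros p' r' He Hk' i Hi.
    destruct (Nat.eq_dec i L) as [->|Hne].
    + eapply Commit_kapp; [|exact Hk']. eapply Commit_transfer; [exact Hc|].
      intros; apply He; lia.
    + apply (HM p' r'); auto. intros; apply He; lia. lia.
Qed.

Lemma bfst_bpair a b : bfst (bpair a b) = a.
Proof.
  apply functional_extensionality; intro n. unfold bfst, bpair.
  rewrite Nat.even_even, Nat.div2_double. reflexivity.
Qed.

Lemma bsnd_bpair a b : bsnd (bpair a b) = b.
Proof.
  apply functional_extensionality; intro n. unfold bsnd, bpair.
  rewrite Nat.even_odd, Nat.div2_odd'. reflexivity.
Qed.

Lemma bpair_agree a a' b b' M :
  (forall i, (i < M)%nat -> a' i = a i) -> (forall i, (i < M)%nat -> b' i = b i) ->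
  forall i, (i < M)%nat -> bpair a' b' i = bpair a b i.
Proof.
  intros Ha Hb i Hi. unfold bpair. pose proof (Nat.le_div2_diag_l i).
  destruct (Nat.even i); [apply Ha|apply Hb]; lia.
Qed.


Lemma uniform (u v : R) (P : nat -> R -> Prop) :
  u <= v ->
  (forall n m y, (n <= m)%nat -> P n y -> P m y) ->
  (forall x, u <= x <= v -> exists n d, 0 < d /\ forall y, Rabs (y - x) < d -> P n y) ->
  exists N eta, 0 < eta /\ forall y, u - eta < y < v + eta -> P N y.
Proof.
  intros Huv Hmono Hloc.
  set (E := fun w => u <= w <= v /\ exists N, forall y, u <= y <= w -> P N y).
  assert (HEu : E u).
  { split; [lra|]. destruct (Hloc u) as [n [d [Hd Hn]]]; [lra|].
    exists n. intros y Hy. apply Hn. replace (y - u) with 0 by lra. rewrite Rabs_R0; lra. }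
  assert (Hb : bound E). { exists v. intros w [Hw _]. lra. }
  destruct (completeness E Hb (ex_intro _ u HEu)) as [s [Hub Hlub]].
  assert (Hsu : u <= s) by (apply Hub; exact HEu).
  assert (Hsv : s <= v) by (apply Hlub; intros w [Hw _]; lra).
  destruct (Hloc s) as [ns [ds [Hds Hns]]]; [lra|].
  assert (Hw : exists w, E w /\ s - ds/2 < w).
  { apply NNPP. intro Hn. assert (s <= s - ds/2); [|lra].
    apply Hlub. intros w Hw. apply Rnot_lt_le. intro Hlt. apply Hn. exists w; auto. }
  destruct Hw as [w [[Hw1 [Nw HNw]] Hw2]].
  set (w' := Rmin (s + ds/2) v).
  assert (HEw' : E w').
  { split. { unfold w'; split; [apply Rmin_glb; lra|apply Rmin_r]. }
    exists (Nat.max Nw ns). intros y Hy.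
    destruct (Rle_dec y w) as [Hyw|Hyw].
    - apply (Hmono Nw); [lia|]. apply HNw; lra.
    - apply (Hmono ns); [lia|]. apply Hns.
      assert (y <= s + ds/2) by (pose proof (Rmin_l (s+ds/2) v); unfold w' in Hy; lra).
      apply Rabs_def1; lra. }
  assert (Hw's : w' <= s) by (apply Hub; exact HEw').
  assert (Hw'v : w' = v).
  { unfold w' in *. destruct (Rle_dec (s + ds/2) v).
    - rewrite Rmin_left in Hw's by lra. lra.
    - rewrite Rmin_right by lra. reflexivity. }
  destruct HEw' as [_ [Nv HNv]]. rewrite Hw'v in HNv.
  destruct (Hloc u) as [nu [du [Hdu Hnu]]]; [lra|].
  destruct (Hloc v) as [nv [dv [Hdv Hnv]]]; [lra|].
  exists (Nat.max Nv (Nat.max nu nv)), (Rmin du dv). split.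
  { apply Rmin_glb_lt; auto. }
  intros y Hy. pose proof (Rmin_l du dv). pose proof (Rmin_r du dv).
  destruct (Rlt_dec y u) as [Hyu|Hyu].
  - apply (Hmono nu); [lia|]. apply Hnu. apply Rabs_def1; lra.
  - destruct (Rlt_dec v y) as [Hyv|Hyv].
    + apply (Hmono nv); [lia|]. apply Hnv. apply Rabs_def1; lra.
    + apply (Hmono Nv); [lia|]. apply HNv; lra.
Qed.

Definition fl (x : R) : nat := Z.to_nat (Zfloor x).

Lemma fl_spec x : 0 <= x -> INR (fl x) <= x < INR (fl x) + 1.
Proof.
  intro Hx. unfold fl. pose proof (Zfloor_bound x) as [H1 H2].
  assert (0 <= Zfloor x)%Z.
  { apply Zfloor_lub. simpl. lra. }
  rewrite INR_IZR_INZ, Znat.Z2Nat.id by lia. lra.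
Qed.

Lemma qcode_frac a n : qcode (cpair a (cpair 0 (Nat.pow 2 n - 1))) (INR a / 2 ^ n).
Proof.
  exists a, 0%nat, (Nat.pow 2 n - 1)%nat. split; [reflexivity|].
  unfold qval. assert (1 <= Nat.pow 2 n)%nat.
  { pose proof (Nat.pow_nonzero 2 n ltac:(lia)). lia. }
  replace (S (Nat.pow 2 n - 1)) with (Nat.pow 2 n) by lia.
  rewrite pow_INR, INR_0. replace (INR 2) with 2 by (simpl; lra).
  unfold Rminus; rewrite Ropp_0, Rplus_0_r. reflexivity.
Qed.

Definition OName (nu : Baire) (x : R) : Prop :=
  0 <= x <= 1 /\ forall n, exists q, qcode (nu n) q /\ Rabs (q - x) < / 2 ^ n.

Lemma OName_rep nu x : OName nu x -> rep I_space nu x.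
Proof.
  intros [Hx H]. split; [exact Hx|]. intro n. destruct (H n) as [q [Hq Hl]].
  exists q; split; auto. lra.
Qed.

Definition sname (x : R) : Baire :=
  fun n => cpair (fl (x * 2 ^ S n)) (cpair 0 (Nat.pow 2 (S n) - 1)).

Lemma sname_close x n : 0 <= x ->
  exists q, qcode (sname x n) q /\ Rabs (q - x) < / 2 ^ S n.
Proof.
  intro Hx. exists (INR (fl (x * 2 ^ S n)) / 2 ^ S n). split.
  - apply qcode_frac.
  - assert (HP : 0 < 2 ^ S n) by (apply pow_lt; lra).
    assert (0 <= x * 2 ^ S n) by (apply Rmult_le_pos; lra).
    pose proof (fl_spec _ H) as [H1 H2].
    set (a := INR (fl (x * 2 ^ S n))) in *.
    assert (Ha : a / 2 ^ S n - x = (a - x * 2 ^ S n) / 2 ^ S n) by (field; lra).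
    rewrite Ha. unfold Rdiv. rewrite Rabs_mult, Rabs_inv, (Rabs_right (2 ^ S n)) by lra.
    rewrite <- (Rmult_1_l (/ 2 ^ S n)) at 2. apply Rmult_lt_compat_r.
    + apply Rinv_0_lt_compat; lra.
    + apply Rabs_def1; lra.
Qed.

Lemma inv_pow_S n : / 2 ^ S n = / 2 ^ n / 2.
Proof. simpl. assert (0 < 2 ^ n) by (apply pow_lt; lra). field. lra. Qed.

Lemma inv_pow_pos n : 0 < / 2 ^ n.
Proof. apply Rinv_0_lt_compat, pow_lt; lra. Qed.

Lemma sname_OName x : 0 <= x <= 1 -> OName (sname x) x.
Proof.
  intro Hx. split; auto. intro n. destruct (sname_close x n) as [q [Hq Hl]]; [lra|].
  exists q. split; auto. rewrite inv_pow_S in Hl. pose proof (inv_pow_pos n). lra.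
Qed.

Lemma OName_exists x : 0 <= x <= 1 -> exists nu, OName nu x.
Proof. intro; exists (sname x); apply sname_OName; auto. Qed.

Lemma open_ext nu x : OName nu x -> forall k, exists d, 0 < d /\ forall y, 0 <= y <= 1 ->
  Rabs (y - x) < d -> exists nu', OName nu' y /\ forall i, (i < k)%nat -> nu' i = nu i.
Proof.
  intros [Hx Hn] k.
  assert (Hsl : exists d, 0 < d /\ forall i, (i < k)%nat ->
             exists q, qcode (nu i) q /\ Rabs (q - x) + d < / 2 ^ i).
  { induction k as [|k IH].
    - exists 1. split; [lra|]. intros; lia.
    - destruct IH as [d [Hd Hi]]. destruct (Hn k) as [q [Hq Hl]].
      exists (Rmin d ((/ 2 ^ k - Rabs (q - x)) / 2)). split.
      + apply Rmin_glb_lt; lra.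
      + intros i Hik. pose proof (Rmin_l d ((/ 2 ^ k - Rabs (q - x)) / 2)).
        pose proof (Rmin_r d ((/ 2 ^ k - Rabs (q - x)) / 2)).
        destruct (Nat.eq_dec i k) as [->|Hne].
        * exists q; split; auto; lra.
        * destruct (Hi i) as [q' [Hq' Hl']]; [lia|]. exists q'; split; auto; lra. }
  destruct Hsl as [d [Hd Hsl]]. exists d. split; auto.
  intros y Hy Hyx. exists (fun i => if Nat.ltb i k then nu i else sname y i).
  split.
  - split; auto. intro i. destruct (Nat.ltb_spec i k).
    + destruct (Hsl i H) as [q [Hq Hl]]. exists q; split; auto.
      replace (q - y) with ((q - x) + (x - y)) by ring.
      pose proof (Rabs_triang (q - x) (x - y)). rewrite Rabs_minus_sym in Hyx. lra.
    + destruct (sname_OName y Hy) as [_ Hs]. apply Hs.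
  - intros i Hi. destruct (Nat.ltb_spec i k); [reflexivity|lia].
Qed.


Definition Excl (r : Baire) (y : R) : Prop :=
  exists k i j qi qj, r k = S (cpair i j) /\ qcode i qi /\ qcode j qj /\ qi < y < qj.
Definition member (r : Baire) (y : R) : Prop := 0 <= y <= 1 /\ ~ Excl r y.

Lemma rep_member r S : rep AI_space r S -> forall y, S y <-> member r y.
Proof.
  intros [H1 H2] y. split.
  - intro Hy. pose proof (H1 y Hy). split; auto. intro He. apply (proj2 (H2 y H) He Hy).
  - intros [Hy He]. apply NNPP. intro Hn. apply He. apply (proj1 (H2 y Hy) Hn).
Qed.

Definition IsInt (r : Baire) : Prop :=
  exists a b, 0 <= a <= b /\ b <= 1 /\ forall y, member r y <-> a <= y <= b.

Definition GDc (r : Baire) : Prop := exists S, rep AI_space r S /\ exists y, rel ConC_I S y.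

Definition Gspec (r nu : Baire) : Prop :=
  forall S, rep AI_space r S -> (exists y, rel ConC_I S y) -> exists z, rep I_space nu z /\ rel ConC_I S z.

Definition Gdef (r : Baire) : Baire := epsilon (inhabits (fun _ => 0%nat)) (Gspec r).

Lemma Gspec_ex r nu z S0 : rep AI_space r S0 -> rep I_space nu z -> rel ConC_I S0 z -> Gspec r nu.
Proof.
  intros HS0 Hnu Hrel S HS [y Hy]. exists z. split; auto. simpl in *.
  split.
  - apply (rep_member r S HS). apply (rep_member r S0 HS0). apply Hrel.
  - apply Hy.
Qed.

Lemma Gdef_realizes : realizes ConC_I GDc Gdef.
Proof.
  intros r S HS [y Hy]. split.
  - exists S; split; auto. exists y; auto.
  - assert (HG : Gspec r (Gdef r)).
    { unfold Gdef. apply epsilon_spec. simpl in Hy.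
      assert (Hy01 : 0 <= y <= 1) by (apply (proj1 HS); apply Hy).
      destruct (OName_exists y Hy01) as [nu Hnu]. exists nu.
      eapply Gspec_ex; [exact HS| apply OName_rep; exact Hnu | exact Hy]. }
    apply HG; [exact HS| exists y; exact Hy].
Qed.

Definition Gnu (r0 nu : Baire) (r : Baire) : Baire :=
  if excluded_middle_informative (r = r0) then nu else Gdef r.

Lemma Gnu_realizes r0 nu z : rep I_space nu z -> member r0 z -> realizes ConC_I GDc (Gnu r0 nu).
Proof.
  intros Hnu Hz r S HS Hdom. destruct (Gdef_realizes r S HS Hdom) as [HGD HG].
  split; auto. unfold Gnu. destruct (excluded_middle_informative (r = r0)) as [->|Hne]; auto.
  exists z. split; auto. simpl. split.
  - apply (rep_member r0 S HS). auto.
  - destruct Hdom as [y [_ Hi]]. exact Hi.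
Qed.

Lemma GDc_IsInt r : GDc r -> IsInt r.
Proof.
  intros [S [HS [y [_ [a [b [H1 [H2 H3]]]]]]]]. exists a, b. split; auto. split; auto.
  intro w. rewrite <- (rep_member r S HS). apply H3.
Qed.

Section Psi.
Variable f : problem.
Variables aH aK : nat -> nat.
Hypothesis HW : forall (GD : Baire -> Prop) (G : Baire -> Baire), realizes ConC_I GD G ->
      forall p x, rep (src f) p x -> (exists y, rel f x y) ->
        exists r, kapp aK p r /\ GD r /\
          exists s, kapp aH (bpair p (G r)) s /\
            exists y, rep (tgt f) s y /\ rel f x y.

Lemma Psi p x : rep (src f) p x -> (exists y, rel f x y) ->
  exists r, kapp aK p r /\ IsInt r /\ forall nu z, rep I_space nu z -> member r z ->
    exists s, kapp aH (bpair p nu) s /\ exists y, rep (tgt f) s y /\ rel f x y.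
Proof.
  intros Hp Hd. destruct (HW GDc Gdef Gdef_realizes p x Hp Hd) as [r [Hr [HGD _]]].
  exists r. split; auto. split; [apply GDc_IsInt; auto|].
  intros nu z Hnu Hz.
  destruct (HW GDc (Gnu r nu) (Gnu_realizes r nu z Hnu Hz) p x Hp Hd) as [r' [Hr' [_ [s [Hs Hy]]]]].
  pose proof (kapp_unique _ _ _ _ Hr Hr') as <-.
  exists s. split; auto. unfold Gnu in Hs.
  destruct (excluded_middle_informative (r = r)) as [_|C]; [auto|congruence].
Qed.
End Psi.


Lemma comp_lemma r a b eps : 0 < eps -> (forall y, member r y <-> a <= y <= b) ->
  exists L, forall r', (forall i, (i < L)%nat -> r' i = r i) ->
    forall y, member r' y -> a - eps < y < b + eps.
Proof.
  intros He Hr.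
  set (P := fun n y => 0 <= y <= 1 -> (a - eps < y < b + eps) \/
     exists k, (k < n)%nat /\ exists i j qi qj, r k = S (cpair i j) /\ qcode i qi /\ qcode j qj /\ qi < y < qj).
  destruct (uniform 0 1 P) as [N [eta [Heta HN]]].
  - lra.
  - intros n m y Hnm Hn Hy. destruct (Hn Hy) as [H|[k [Hk H]]]; [left; auto|right].
    exists k. split; [lia|auto].
  - intros x Hx. destruct (classic (a - eps < x < b + eps)) as [Hin|Hout].
    + exists 0%nat, (Rmin (x - (a - eps)) (b + eps - x)). split.
      { apply Rmin_glb_lt; lra. }
      intros y Hy _. left. pose proof (Rmin_l (x - (a - eps)) (b + eps - x)).
      pose proof (Rmin_r (x - (a - eps)) (b + eps - x)). apply Rabs_def2 in Hy. lra.
    + assert (Hex : Excl r x).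
      { apply NNPP. intro Hn. assert (member r x) by (split; auto).
        apply Hr in H. lra. }
      destruct Hex as [k [i [j [qi [qj [H1 [H2 [H3 H4]]]]]]]].
      exists (S k), (Rmin (x - qi) (qj - x)). split. { apply Rmin_glb_lt; lra. }
      intros y Hy _. right. exists k. split; [lia|].
      exists i, j, qi, qj. repeat split; auto.
      pose proof (Rmin_l (x - qi) (qj - x)). pose proof (Rmin_r (x - qi) (qj - x)).
      apply Rabs_def2 in Hy. lra.
      pose proof (Rmin_l (x - qi) (qj - x)). pose proof (Rmin_r (x - qi) (qj - x)).
      apply Rabs_def2 in Hy. lra.
  - exists N. intros r' Hr' y [Hy Hne].
    destruct (HN y ltac:(lra) Hy) as [H|[k [Hk [i [j [qi [qj [H1 H2]]]]]]]]; auto.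
    exfalso. apply Hne. exists k, i, j, qi, qj. rewrite Hr'; auto.
Qed.

Definition Zr : Baire := fun _ => 0%nat.

Lemma rep_A2_full : rep A2_space Zr (fun _ => True).
Proof.
  split; [intros; unfold Zr; lia|]. intro b. split.
  - intro H; exfalso; apply H; auto.
  - intros [k Hk]. discriminate.
Qed.

Definition akill (c : bool) (M : nat) : Baire := fun k => if Nat.ltb k M then 0%nat else S (b2n c).

Lemma b2n_inj b c : b2n b = b2n c -> b = c.
Proof. destruct b, c; simpl; congruence. Qed.

Lemma rep_A2_kill c M : rep A2_space (akill c M) (fun b => b <> c).
Proof.
  split.
  - intro k. unfold akill. destruct (Nat.ltb k M); [lia|]. destruct c; simpl; lia.
  - intro b. split.
    + intro H. apply NNPP in H. subst. exists M. unfold akill. rewrite Nat.ltb_irrefl. auto.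
    + intros [k Hk] Hne. unfold akill in Hk. destruct (Nat.ltb k M); [discriminate|].
      injection Hk as Hk. apply b2n_inj in Hk. congruence.
Qed.

Lemma rep_AI_full : rep AI_space Zr unit_interval.
Proof.
  split; auto. intros x Hx. split.
  - intro H; exfalso; auto.
  - intros [k [i [j [qi [qj [H _]]]]]]. discriminate.
Qed.

Definition tq (i Mg : nat) : R := INR i / INR (S Mg).

Definition lcodeL (i Mg e : nat) : nat := cpair (i * S e) (cpair (S Mg) (S Mg * S e - 1)).
Definition lcodeR (i Mg e : nat) : nat := cpair (i * S e + S Mg) (cpair 0 (S Mg * S e - 1)).
Definition cm1 : nat := cpair 0 (cpair 1 0).
Definition c2 : nat := cpair 2 (cpair 0 0).

Lemma qcode_m1 : qcode cm1 (-1).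
Proof. exists 0%nat, 1%nat, 0%nat. split; auto. unfold qval. simpl. field. Qed.
Lemma qcode_2 : qcode c2 2.
Proof. exists 2%nat, 0%nat, 0%nat. split; auto. unfold qval. simpl. field. Qed.

Lemma INR_S_pos n : 0 < INR (S n).
Proof. apply lt_0_INR; lia. Qed.

Lemma qcode_L i Mg e : qcode (lcodeL i Mg e) (tq i Mg - / INR (S e)).
Proof.
  exists (i * S e)%nat, (S Mg), (S Mg * S e - 1)%nat. split; auto.
  unfold qval, tq. replace (S (S Mg * S e - 1)) with (S Mg * S e)%nat by lia.
  rewrite !mult_INR. pose proof (INR_S_pos Mg). pose proof (INR_S_pos e). field. lra.
Qed.

Lemma qcode_R i Mg e : qcode (lcodeR i Mg e) (tq i Mg + / INR (S e)).
Proof.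
  exists (i * S e + S Mg)%nat, 0%nat, (S Mg * S e - 1)%nat. split; auto.
  unfold qval, tq. replace (S (S Mg * S e - 1)) with (S Mg * S e)%nat by lia.
  rewrite plus_INR, !mult_INR. pose proof (INR_S_pos Mg). pose proof (INR_S_pos e).
  simpl (INR 0). field. lra.
Qed.

Definition bsing (i Mg N : nat) : Baire := fun k =>
  if Nat.ltb k N then 0%nat else
  if Nat.even (k - N) then S (cpair cm1 (lcodeL i Mg (Nat.div2 (k - N))))
  else S (cpair (lcodeR i Mg (Nat.div2 (k - N))) c2).

Lemma arch_inv (d : R) : 0 < d -> exists e : nat, / INR (S e) < d.
Proof.
  intro Hd. exists (fl (/ d)). pose proof (fl_spec (/ d)) as [H1 H2].
  { left; apply Rinv_0_lt_compat; auto. }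
  rewrite S_INR. replace d with (/ / d) at 2 by (field; lra).
  apply Rinv_lt_contravar; [|lra].
  apply Rmult_lt_0_compat; [apply Rinv_0_lt_compat; auto|].
  pose proof (pos_INR (fl (/ d))). lra.
Qed.

Lemma rep_AI_sing i Mg N : 0 <= tq i Mg <= 1 -> rep AI_space (bsing i Mg N) (fun y => y = tq i Mg).
Proof.
  intro Ht. split.
  - intros x ->. exact Ht.
  - intros x Hx. unfold unit_interval in Hx. split.
    + intro Hne. destruct (arch_inv (Rabs (x - tq i Mg))) as [e He].
      { apply Rabs_pos_lt. intro; apply Hne; lra. }
      destruct (Rlt_dec x (tq i Mg)) as [Hlt|Hge].
      * rewrite Rabs_left in He by lra.
        exists (N + 2 * e)%nat, cm1, (lcodeL i Mg e), (-1), (tq i Mg - / INR (S e)).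
        split; [|split; [apply qcode_m1|split; [apply qcode_L|lra]]].
        unfold bsing. destruct (Nat.ltb_spec (N + 2 * e) N); [lia|].
        replace (N + 2 * e - N)%nat with (2 * e)%nat by lia.
        rewrite Nat.even_even, Nat.div2_double. reflexivity.
      * assert (x > tq i Mg) by (destruct (Rtotal_order x (tq i Mg)) as [?|[?|?]]; auto; lra).
        rewrite Rabs_right in He by lra.
        exists (N + (2 * e + 1))%nat, (lcodeR i Mg e), c2, (tq i Mg + / INR (S e)), 2.
        split; [|split; [apply qcode_R|split; [apply qcode_2|lra]]].
        unfold bsing. destruct (Nat.ltb_spec (N + (2 * e + 1)) N); [lia|].
        replace (N + (2 * e + 1) - N)%nat with (2 * e + 1)%nat by lia.
        rewrite Nat.even_odd, Nat.div2_odd'. reflexivity.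
    + intros [k [i0 [j0 [qi [qj [Hk [Hqi [Hqj Hlt]]]]]]]] Heq.
      unfold bsing in Hk. destruct (Nat.ltb k N); [discriminate|].
      pose proof (INR_S_pos (Nat.div2 (k - N))) as Hp. pose proof (Rinv_0_lt_compat _ Hp).
      destruct (Nat.even (k - N)); injection Hk as Hk; apply cpair_inj in Hk as [<- <-].
      * pose proof (qcode_fun _ _ _ Hqj (qcode_L i Mg (Nat.div2 (k - N)))). lra.
      * pose proof (qcode_fun _ _ _ Hqi (qcode_R i Mg (Nat.div2 (k - N)))). lra.
Qed.


Lemma php (n : nat) : forall (R : nat -> nat -> Prop),
  (forall i, (i <= S n)%nat -> exists k, (k <= n)%nat /\ R i k) ->
  (forall i i' k, (i <= S n)%nat -> (i' <= S n)%nat -> R i k -> R i' k -> i = i') -> False.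
Proof.
  induction n as [|n IH]; intros R Hex Hinj.
  - destruct (Hex 0%nat) as [k0 [Hk0 H0]]; [lia|]. destruct (Hex 1%nat) as [k1 [Hk1 H1]]; [lia|].
    assert (k0 = 0 /\ k1 = 0)%nat as [-> ->] by lia. discriminate (Hinj 0%nat 1%nat 0%nat ltac:(lia) ltac:(lia) H0 H1).
  - destruct (Hex (S (S n))) as [ks [Hks HRs]]; [lia|].
    apply (IH (fun i k => exists k', R i k' /\ ((k' = S n /\ k = ks) \/ (k' <> S n /\ k = k')))).
    + intros i Hi. destruct (Hex i) as [k' [Hk' HR]]; [lia|].
      assert (k' <> ks).
      { intro; subst. pose proof (Hinj i (S (S n)) ks ltac:(lia) ltac:(lia) HR HRs). lia. }
      destruct (Nat.eq_dec k' (S n)) as [->|Hne].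
      * exists ks. split; [lia|]. exists (S n). split; auto.
      * exists k'. split; [lia|]. exists k'. split; auto.
    + intros i i' k Hi Hi' [k1 [H1 C1]] [k2 [H2 C2]].
      destruct C1 as [[E1 F1]|[E1 F1]]; destruct C2 as [[E2 F2]|[E2 F2]]; subst.
      all: first [ exact (Hinj i i' _ ltac:(lia) ltac:(lia) H1 H2)
        | exfalso; pose proof (Hinj i (S (S n)) _ ltac:(lia) ltac:(lia) H1 HRs); lia
        | exfalso; pose proof (Hinj i' (S (S n)) _ ltac:(lia) ltac:(lia) H2 HRs); lia
        | idtac ].
Qed.

Lemma pow2_ge n : INR (S n) <= 2 ^ n.
Proof.
  induction n as [|n IH]; [simpl; lra|]. rewrite S_INR. pose proof (pos_INR n).
  rewrite S_INR in *. simpl. lra.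
Qed.

Definition P0 : problem := prod_problem C2 AUC_I.

Section Main.
Variables aH aK : nat -> nat.
Hypothesis HW : forall (GD : Baire -> Prop) (G : Baire -> Baire), realizes ConC_I GD G ->
      forall p x, rep (src P0) p x -> (exists y, rel P0 x y) ->
        exists r, kapp aK p r /\ GD r /\
          exists s, kapp aH (bpair p (G r)) s /\
            exists y, rep (tgt P0) s y /\ rel P0 x y.

Lemma PsiP al be (A : bool -> Prop) (B : R -> Prop) :
  rep A2_space al A -> rep AI_space be B -> (exists b, A b) -> (exists y, rel AUC_I B y) ->
  exists r, kapp aK (bpair al be) r /\ IsInt r /\ forall nu z, rep I_space nu z -> member r z ->
    exists s, kapp aH (bpair (bpair al be) nu) s /\ exists b y, s 0%nat = b2n b /\ A b /\ B y /\
      forall n, exists q, qcode (s (2 * n + 1)%nat) q /\ Rabs (q - y) <= / 2 ^ n.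
Proof.
  intros Ha Hb [b0 Hb0] [y0 Hy0].
  destruct (Psi P0 aH aK HW (bpair al be) (A, B)) as [r [Hr [HI Hrest]]].
  - simpl. rewrite bfst_bpair, bsnd_bpair. split; auto.
  - exists (b0, y0). simpl. split; auto.
  - exists r. split; auto. split; auto. intros nu z Hnu Hz.
    destruct (Hrest nu z Hnu Hz) as [s [Hs [[b y] [[Hrb [_ Hry]] [Hrel1 Hrel2]]]]].
    exists s. split; auto. exists b, y. simpl in *. unfold bfst in Hrb. simpl in Hrb.
    split; auto. split; auto. split; [apply Hrel2|].
    intro n. destruct (Hry n) as [q Hq]. exists q. exact Hq.
Qed.

Lemma AUC_dom_full : exists y, rel AUC_I unit_interval y.
Proof. exists 0. simpl. split; [unfold unit_interval; lra|]. left. tauto. Qed.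

Lemma AUC_dom_sing t : 0 <= t <= 1 -> exists y, rel AUC_I (fun y => y = t) y.
Proof. intro. exists t. simpl. split; auto. right. exists t. split; auto. tauto. Qed.

Lemma lemL be B : rep AI_space be B -> (exists y, rel AUC_I B y) ->
  forall r, kapp aK (bpair Zr be) r -> forall c, exists u, member r u /\
    forall nu s, OName nu u -> kapp aH (bpair (bpair Zr be) nu) s -> s 0%nat <> b2n c.
Proof.
  intros Hbe HB r Hr c. apply NNPP. intro Hn.
  assert (H : forall u, member r u -> exists nu s, OName nu u /\
             kapp aH (bpair (bpair Zr be) nu) s /\ s 0%nat = b2n c).
  { intros u Hu. apply NNPP. intro H1. apply Hn. exists u. split; auto.
    intros nu s Hnu Hs E. apply H1. exists nu, s. auto. }
  clear Hn. set (q := bpair Zr be).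
  destruct (PsiP Zr be (fun _ => True) B rep_A2_full Hbe (ex_intro _ true I) HB)
    as [r1 [Hr1 [[a [b [Hab [Hb1 Hint]]]] _]]].
  pose proof (kapp_unique _ _ _ _ Hr Hr1) as <-.
  set (Pn := fun n y => 0 <= y <= 1 -> exists nu k, OName nu y /\ (k <= n)%nat /\
                       Commit aH (bpair q nu) 0 (b2n c) k).
  destruct (uniform a b Pn) as [N [eta [Heta HN]]]; [lra| | |].
  - intros n m y Hnm Hn Hy. destruct (Hn Hy) as [nu [k [H1 [H2 H3]]]]. exists nu, k.
    split; [exact H1|split; [lia|exact H3]].
  - intros x Hx. assert (Hm : member r x) by (apply Hint; auto).
    destruct (H x Hm) as [nu [s [Hnu [Hs Hs0]]]].
    destruct (kapp_Commit _ _ _ 0%nat Hs) as [k Hk]. rewrite Hs0 in Hk.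
    destruct (open_ext nu x Hnu k) as [d [Hd Hext]].
    exists k, d. split; auto. intros y Hy Hy01.
    destruct (Hext y Hy01 Hy) as [nu' [Hnu' Hag]]. exists nu', k. split; auto. split; auto.
    eapply Commit_transfer; [exact Hk|]. apply bpair_agree; auto.
  - destruct (comp_lemma r a b eta Heta Hint) as [L HL].
    destruct (kapp_cont _ _ _ Hr L) as [MK HMK].
    set (M := Nat.max N MK).
    assert (Hnc : negb c <> c) by (destruct c; simpl; congruence).
    destruct (PsiP (akill c M) be (fun b => b <> c) B (rep_A2_kill c M) Hbe
                   (ex_intro (fun b => b <> c) (negb c) Hnc) HB)
      as [r' [Hr' [[a' [b' [Hab' [Hb1' Hint']]]] Hout]]].
    assert (Hag : forall i, (i < L)%nat -> r' i = r i).
    { apply (HMK (bpair (akill c M) be) r'); auto. apply bpair_agree; auto.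
      intros i Hi. unfold akill, Zr. destruct (Nat.ltb_spec i M); auto. lia. }
    assert (Hma : member r' a') by (apply Hint'; lra).
    pose proof (HL r' Hag a' Hma) as Hwin.
    destruct Hma as [Ha01 _].
    destruct (HN a' ltac:(lra) Ha01) as [nu [k [Hnu [Hk Hc]]]].
    destruct (Hout nu a' (OName_rep _ _ Hnu) ltac:(apply Hint'; lra)) as [s [Hs [b0 [y [Hs0 [Hb0 _]]]]]].
    assert (Hc' : Commit aH (bpair (bpair (akill c M) be) nu) 0 (b2n c) k).
    { eapply Commit_transfer; [exact Hc|]. apply bpair_agree; auto.
      apply bpair_agree; auto. intros i Hi. unfold akill, Zr.
      destruct (Nat.ltb_spec i M); auto. lia. }
    pose proof (Commit_kapp _ _ _ _ _ _ Hc' Hs). rewrite H0 in Hs0.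
    apply b2n_inj in Hs0. congruence.
Qed.
End Main.


Lemma grid_pt lo hi M : 0 <= lo -> hi - lo >= / INR (S M) ->
  lo < INR (S (fl (lo * INR (S M)))) / INR (S M) <= hi.
Proof.
  intros Hlo Hd. pose proof (INR_S_pos M) as HM.
  assert (0 <= lo * INR (S M)) by (apply Rmult_le_pos; lra).
  pose proof (fl_spec _ H) as [H1 H2]. rewrite S_INR.
  set (f := INR (fl (lo * INR (S M)))) in *.
  split.
  - apply (Rmult_lt_reg_r (INR (S M))); auto. unfold Rdiv. rewrite Rmult_assoc, Rinv_l by lra. lra.
  - apply (Rmult_le_reg_r (INR (S M))); auto. unfold Rdiv. rewrite Rmult_assoc, Rinv_l by lra.
    assert (hi * INR (S M) - lo * INR (S M) >= 1); [|lra].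
    replace (hi * INR (S M) - lo * INR (S M)) with ((hi - lo) * INR (S M)) by ring.
    replace 1 with (/ INR (S M) * INR (S M)) by (field; lra).
    apply Rle_ge. apply Rmult_le_compat_r; lra.
Qed.

Lemma INR_div_le1 k M : INR k / INR (S M) <= 1 -> (k <= S M)%nat.
Proof.
  intro H. pose proof (INR_S_pos M). apply INR_le.
  apply (Rmult_le_compat_r (INR (S M))) in H; [|lra].
  unfold Rdiv in H. rewrite Rmult_assoc, Rinv_l, Rmult_1_r, Rmult_1_l in H by lra. exact H.
Qed.

Lemma tq_range i Mg : (i <= S Mg)%nat -> 0 <= tq i Mg <= 1.
Proof.
  intro H. unfold tq. pose proof (INR_S_pos Mg). apply le_INR in H. pose proof (pos_INR i).
  split.
  - apply Rmult_le_pos; [lra|]. left; apply Rinv_0_lt_compat; lra.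
  - apply (Rmult_le_reg_r (INR (S Mg))); auto. unfold Rdiv.
    rewrite Rmult_assoc, Rinv_l by lra. lra.
Qed.

Lemma tq_sep i i' Mg : i <> i' -> Rabs (tq i Mg - tq i' Mg) >= / INR (S Mg).
Proof.
  intro Hne. unfold tq. pose proof (INR_S_pos Mg).
  replace (INR i / INR (S Mg) - INR i' / INR (S Mg)) with ((INR i - INR i') * / INR (S Mg))
    by (field; lra).
  rewrite Rabs_mult, (Rabs_right (/ INR (S Mg))) by (left; apply Rinv_0_lt_compat; lra).
  assert (Rabs (INR i - INR i') >= 1).
  { apply Nat.lt_gt_cases in Hne. destruct Hne as [Hl|Hl].
    - assert (INR (S i) <= INR i') by (apply le_INR; lia). rewrite S_INR in H0.
      rewrite Rabs_left; lra.
    - assert (INR (S i') <= INR i) by (apply le_INR; lia). rewrite S_INR in H0.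
      rewrite Rabs_right; lra. }
  pose proof (Rinv_0_lt_compat _ H).
  replace (/ INR (S Mg)) with (1 * / INR (S Mg)) at 2 by ring.
  apply Rle_ge, Rmult_le_compat_r; lra.
Qed.

Lemma window_in (x lo hi e : R) : 0 <= x <= 1 -> lo - e <= x <= hi + e ->
  Rmax 0 (lo - e) <= x <= Rmin 1 (hi + e).
Proof.
  intros. split.
  - unfold Rmax. destruct (Rle_dec 0 (lo - e)); lra.
  - unfold Rmin. destruct (Rle_dec 1 (hi + e)); lra.
Qed.

Section Main2.
Variables aH aK : nat -> nat.
Hypothesis HW : forall (GD : Baire -> Prop) (G : Baire -> Baire), realizes ConC_I GD G ->
      forall p x, rep (src P0) p x -> (exists y, rel P0 x y) ->
        exists r, kapp aK p r /\ GD r /\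
          exists s, kapp aH (bpair p (G r)) s /\
            exists y, rep (tgt P0) s y /\ rel P0 x y.

Lemma main_false : False.
Proof.
  set (p0 := bpair Zr Zr).
  destruct (PsiP aH aK HW Zr Zr (fun _ => True) unit_interval rep_A2_full rep_AI_full
              (ex_intro _ true I) AUC_dom_full)
    as [r0 [Hr0 [[a [b [Hab [Hb1 Hint0]]]] H0]]].
  fold p0 in Hr0, H0.
  set (Pb := fun n y => 0 <= y <= 1 -> exists nu k v, OName nu y /\ (k <= n)%nat /\
        (v = b2n false \/ v = b2n true) /\ Commit aH (bpair p0 nu) 0 v k).
  destruct (uniform a b Pb) as [N0b [etab [Hetab HNb]]]; [lra| | |].
  { intros n m y Hnm Hn Hy. destruct (Hn Hy) as [nu [k [v [H1 [H2 H3]]]]].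
    exists nu, k, v. split; [exact H1|split; [lia|exact H3]]. }
  { intros x Hx. assert (Hx01 : 0 <= x <= 1) by lra.
    pose proof (sname_OName x Hx01) as Hnu.
    destruct (H0 (sname x) x (OName_rep _ _ Hnu) ltac:(apply Hint0; auto))
      as [s [Hs [b0 [y0 [Hs0 _]]]]].
    destruct (kapp_Commit _ _ _ 0%nat Hs) as [k Hk].
    destruct (open_ext _ x Hnu k) as [d [Hd Hext]].
    exists k, d. split; auto. intros y Hy Hy01.
    destruct (Hext y Hy01 Hy) as [nu' [Hnu' Hag]]. exists nu', k, (s 0%nat).
    split; auto. split; auto. split.
    - rewrite Hs0. destruct b0; auto.
    - eapply Commit_transfer; [exact Hk|]. apply bpair_agree; auto. }
  set (Oc := fun c y => 0 <= y <= 1 /\ exists nu k, OName nu y /\ (k <= N0b)%nat /\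
        Commit aH (bpair p0 nu) 0 (b2n c) k).
  assert (Oc_open : forall c x, Oc c x -> exists rho, 0 < rho /\
             forall y, 0 <= y <= 1 -> Rabs (y - x) < rho -> Oc c y).
  { intros c x [Hx [nu [k [Hnu [Hk Hc]]]]].
    destruct (open_ext _ x Hnu k) as [d [Hd Hext]]. exists d. split; auto.
    intros y Hy01 Hy. destruct (Hext y Hy01 Hy) as [nu' [Hnu' Hag]].
    split; auto. exists nu', k. split; auto. split; auto.
    eapply Commit_transfer; [exact Hc|]. apply bpair_agree; auto. }
  set (u := Rmax 0 (a - etab / 2)). set (v := Rmin 1 (b + etab / 2)).
  assert (Huv : u <= v) by (pose proof (window_in a a b (etab/2) ltac:(lra) ltac:(lra)); fold u v in H; lra).
  assert (Hcover : forall x, u <= x <= v -> Oc false x \/ Oc true x).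
  { intros x Hx. assert (0 <= x <= 1).
    { split; [apply Rle_trans with u; [apply Rmax_l|lra]|apply Rle_trans with v; [lra|apply Rmin_l]]. }
    assert (a - etab < x < b + etab).
    { pose proof (Rmax_r 0 (a - etab / 2)). pose proof (Rmin_r 1 (b + etab / 2)).
      fold u in H1. fold v in H2. lra. }
    destruct (HNb x H1 H) as [nu [k [vv [Hnu [Hk [Hv Hc]]]]]].
    destruct Hv as [->| ->]; [left|right]; split; auto; exists nu, k; auto. }
  set (Pd := fun n y => (forall z, 0 <= z <= 1 -> Rabs (z - y) < / INR (S n) -> Oc false z) \/
                        (forall z, 0 <= z <= 1 -> Rabs (z - y) < / INR (S n) -> Oc true z)).
  destruct (uniform u v Pd Huv) as [nd [etad [Hetad HNd]]].
  { intros n m y Hnm Hn.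
    assert (/ INR (S m) <= / INR (S n)).
    { apply Rinv_le_contravar; [apply INR_S_pos|apply le_INR; lia]. }
    destruct Hn as [Hn|Hn]; [left|right]; intros z Hz Hzy; apply Hn; auto; lra. }
  { intros x Hx. assert (Hoc : exists c, Oc c x) by (destruct (Hcover x Hx); eauto).
    destruct Hoc as [c Hoc]. destruct (Oc_open c x Hoc) as [rho [Hrho Hr]].
    destruct (arch_inv (rho / 2)) as [n Hn]; [lra|].
    exists n, (rho / 2). split; [lra|]. intros y Hy.
    assert (Hall : forall z, 0 <= z <= 1 -> Rabs (z - y) < / INR (S n) -> Oc c z).
    { intros z Hz Hzy. apply Hr; auto.
      replace (z - x) with ((z - y) + (y - x)) by ring.
      pose proof (Rabs_triang (z - y) (y - x)). lra. }
    destruct c; [right|left]; exact Hall. }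
  set (Mg := S nd).
  set (j := S (S Mg)).
  assert (Hj : 2 / 2 ^ j < / INR (S Mg)).
  { pose proof (pow2_ge Mg). pose proof (INR_S_pos Mg).
    assert (0 < 2 ^ Mg) by (apply pow_lt; lra).
    change (2 ^ j) with (2 * (2 * 2 ^ Mg)).
    replace (2 / (2 * (2 * 2 ^ Mg))) with (/ (2 * 2 ^ Mg)) by (field; lra).
    apply Rinv_lt_contravar; [apply Rmult_lt_0_compat; lra|lra]. }
  set (Py := fun n y => 0 <= y <= 1 -> exists nu k w, OName nu y /\ (k <= n)%nat /\
        Commit aH (bpair p0 nu) (2 * j + 1) w k).
  destruct (uniform a b Py) as [N0y [etay [Hetay HNy]]]; [lra| | |].
  { intros n m y Hnm Hn Hy. destruct (Hn Hy) as [nu [k [w [H1 [H2 H3]]]]].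
    exists nu, k, w. split; [exact H1|split; [lia|exact H3]]. }
  { intros x Hx. assert (Hx01 : 0 <= x <= 1) by lra.
    pose proof (sname_OName x Hx01) as Hnu.
    destruct (H0 (sname x) x (OName_rep _ _ Hnu) ltac:(apply Hint0; auto))
      as [s [Hs _]].
    destruct (kapp_Commit _ _ _ (2 * j + 1)%nat Hs) as [k Hk].
    destruct (open_ext _ x Hnu k) as [d [Hd Hext]].
    exists k, d. split; auto. intros y Hy Hy01.
    destruct (Hext y Hy01 Hy) as [nu' [Hnu' Hag]]. exists nu', k, (s (2 * j + 1)%nat).
    split; auto. split; auto.
    eapply Commit_transfer; [exact Hk|]. apply bpair_agree; auto. }
  set (eps := Rmin (etab / 2) etay).
  assert (Heps : 0 < eps) by (apply Rmin_glb_lt; lra).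
  assert (Heps1 : eps <= etab / 2) by apply Rmin_l.
  assert (Heps2 : eps <= etay) by apply Rmin_r.
  destruct (comp_lemma r0 a b eps Heps Hint0) as [L0 HL0].
  destruct (kapp_cont _ _ _ Hr0 L0) as [MK HMK].
  set (N := Nat.max (Nat.max N0b N0y) MK).
  set (qi := fun i => bpair Zr (bsing i Mg N)).
  assert (Hagq : forall i k, (k < N)%nat -> qi i k = p0 k).
  { intros i k Hk. unfold qi, p0. apply (bpair_agree _ _ _ _ N); auto.
    intros i0 Hi0. unfold bsing, Zr. destruct (Nat.ltb_spec i0 N); auto. lia. }
  assert (Hwin : forall i r y, kapp aK (qi i) r -> member r y -> a - eps < y < b + eps).
  { intros i r y Hr Hy. apply (HL0 r); auto. intros i0 Hi0.
    apply (HMK (qi i) r); auto. intros k Hk. apply Hagq. lia. }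
  assert (Hagqn : forall i nu nu' k, (k <= N)%nat -> (forall i0, (i0 < k)%nat -> nu' i0 = nu i0) ->
            forall i0, (i0 < k)%nat -> bpair (qi i) nu' i0 = bpair p0 nu i0).
  { intros i nu nu' k Hk Hnu i0 Hi0. apply (bpair_agree _ _ _ _ k); auto. intros; apply Hagq; lia. }
  set (Rr := fun i k => (k <= Mg)%nat /\ exists r, kapp aK (qi i) r /\ member r (INR k / INR Mg)).
  apply (php Mg Rr).
  -
    intros i Hi. pose proof (tq_range i Mg Hi) as Ht.
    destruct (PsiP aH aK HW Zr (bsing i Mg N) (fun _ => True) (fun y => y = tq i Mg)
                rep_A2_full (rep_AI_sing i Mg N Ht) (ex_intro _ true I) (AUC_dom_sing _ Ht))
      as [r [Hr [[ai [bi [Habi [Hbi Hinti]]]] Hout]]].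
    destruct (lemL aH aK HW (bsing i Mg N) _ (rep_AI_sing i Mg N Ht) (AUC_dom_sing _ Ht) r Hr false)
      as [u0 [Hu0 Hu0b]].
    destruct (lemL aH aK HW (bsing i Mg N) _ (rep_AI_sing i Mg N Ht) (AUC_dom_sing _ Ht) r Hr true)
      as [u1 [Hu1 Hu1b]].
    assert (Hnot : forall c w, member r w ->
              (forall nu s, OName nu w -> kapp aH (bpair (bpair Zr (bsing i Mg N)) nu) s -> s 0%nat <> b2n c) ->
              ~ Oc c w).
    { intros c w Hw Hb [_ [nu [k [Hnu [Hk Hc]]]]].
      destruct (Hout nu w (OName_rep _ _ Hnu) Hw) as [s [Hs _]].
      apply (Hb nu s Hnu Hs). eapply Commit_kapp; [|exact Hs].
      eapply Commit_transfer; [exact Hc|]. apply (Hagqn i nu nu k); auto. lia. }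
    pose proof (Hnot false u0 Hu0 Hu0b) as N0. pose proof (Hnot true u1 Hu1 Hu1b) as N1.
    assert (Huv0 : u <= u0 <= v).
    { apply window_in; [apply Hu0|]. pose proof (Hwin i r u0 Hr Hu0). lra. }
    assert (Huv1 : u <= u1 <= v).
    { apply window_in; [apply Hu1|]. pose proof (Hwin i r u1 Hr Hu1). lra. }
    assert (Hsep : Rabs (u1 - u0) >= / INR (S nd)).
    { apply Rnot_lt_ge. intro Hlt. destruct (HNd u0 ltac:(lra)) as [Hd|Hd].
      - apply N0. apply Hd; [apply Hu0|]. replace (u0 - u0) with 0 by ring. rewrite Rabs_R0.
        apply Rinv_0_lt_compat, INR_S_pos.
      - apply N1. apply Hd; [apply Hu1|]. exact Hlt. }
    set (lo := Rmin u0 u1). set (hi := Rmax u0 u1).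
    assert (Hlohi : hi - lo >= / INR (S nd) /\ 0 <= lo /\ hi <= 1 /\ ai <= lo /\ hi <= bi).
    { apply Hinti in Hu0. apply Hinti in Hu1. destruct Hu0. destruct Hu1.
      unfold lo, hi, Rmin, Rmax. destruct (Rle_dec u0 u1).
      - rewrite Rabs_right in Hsep by lra. lra.
      - rewrite Rabs_left in Hsep by lra. lra. }
    destruct Hlohi as [Hd [Hlo [Hhi [Hai Hbi']]]].
    pose proof (grid_pt lo hi nd Hlo Hd) as [G1 G2].
    exists (S (fl (lo * INR (S nd)))). split.
    + pose proof (INR_div_le1 (S (fl (lo * INR (S nd)))) nd ltac:(lra)). unfold Mg. exact H.
    + split.
      * pose proof (INR_div_le1 (S (fl (lo * INR (S nd)))) nd ltac:(lra)). unfold Mg. exact H.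
      * exists r. split; auto. apply Hinti. unfold Mg. lra.
  -
    intros i i' k Hi Hi' [_ [r [Hr Hm]]] [_ [r' [Hr' Hm']]].
    set (g := INR k / INR Mg) in *.
    assert (Hgw : a - eps < g < b + eps) by exact (Hwin i r g Hr Hm).
    assert (Hg01 : 0 <= g <= 1) by apply Hm.
    destruct (HNy g ltac:(lra) Hg01) as [nu [kk [w [Hnu [Hkk Hc]]]]].
    assert (Hdig : forall i0 r0', (i0 <= S Mg)%nat -> kapp aK (qi i0) r0' -> member r0' g ->
               exists q, qcode w q /\ Rabs (q - tq i0 Mg) <= / 2 ^ j).
    { intros i0 r0' Hi0 Hr0' Hm0.
      pose proof (tq_range i0 Mg Hi0) as Ht.
      destruct (PsiP aH aK HW Zr (bsing i0 Mg N) (fun _ => True) (fun y => y = tq i0 Mg)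
                rep_A2_full (rep_AI_sing i0 Mg N Ht) (ex_intro _ true I) (AUC_dom_sing _ Ht))
        as [r1 [Hr1 [_ Hout]]].
      fold (qi i0) in Hr1. pose proof (kapp_unique _ _ _ _ Hr0' Hr1) as <-.
      destruct (Hout nu g (OName_rep _ _ Hnu) Hm0) as [s [Hs [b0 [y [_ [_ [Hy Hdg]]]]]]].
      subst y. destruct (Hdg j) as [q [Hq Hql]]. exists q. split; auto.
      replace w with (s (2 * j + 1)%nat); auto.
      eapply Commit_kapp; [|exact Hs].
      eapply Commit_transfer; [exact Hc|]. apply (Hagqn i0 nu nu kk); auto. lia. }
    destruct (Hdig i r Hi Hr Hm) as [q [Hq Hql]].
    destruct (Hdig i' r' Hi' Hr' Hm') as [q' [Hq' Hql']].
    pose proof (qcode_fun _ _ _ Hq Hq') as <-.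
    apply NNPP. intro Hne. pose proof (tq_sep i i' Mg Hne).
    assert (Rabs (tq i Mg - tq i' Mg) <= 2 / 2 ^ j).
    { replace (tq i Mg - tq i' Mg) with ((q - tq i' Mg) - (q - tq i Mg)) by ring.
      pose proof (Rabs_triang (q - tq i' Mg) (- (q - tq i Mg))) as HT.
      rewrite Rabs_Ropp in HT. unfold Rminus at 1. lra. }
    lra.
Qed.
End Main2.


Theorem proposition17p3 : ~ Wred (prod_problem C2 AUC_I) ConC_I.
Proof.
  intros [aH [aK [_ [_ HW]]]]. exact (main_false aH aK HW).
Qed.
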